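(* Let $\vec E$ be as in the context, fix $b\in\Lambda^*$, and for $J_\Lambda,J'_\Lambda\in\mathbb{R}^{\Lambda^*}$ consider the curve $J_\Lambda(s)=e^{-s}J_\Lambda+\sqrt{1-e^{-2s}}J'_\Lambda$, $s\ge0$. For almost all $(J_\Lambda,J'_\Lambda)$ with respect to the product of standard Gaussian measures, the following implication holds for every $t\ge0$: if $F_b(s)>0$ for all $0\le s\le t$, then $\sigma_b(s)=\sigma_b(0)$ for all $0\le s\le t$.
   Context: $\Lambda\subset\mathbb{Z}^d$ is a finite box, $\Lambda^*$ its set of nearest-neighbour edges. For spins $\eta$ and $e=\{x,y\}$, $\eta_e=\eta_x\eta_y$; $\mathcal S_\Lambda\subset\{-1,1\}^{\Lambda^*}$ is the set of edge configurations induced by spin configurations on $\Lambda$. $H_{\Lambda,J}(\eta)=-\sum_{e\in\Lambda^*}J_e\eta_e$. $\vec E=(E(\eta,\eta'))_{\eta,\eta'\in\mathcal S_\Lambda}$ is a family of reals with $E(\eta,\eta)=0$ and $E(\eta,\eta'')=E(\eta,\eta')+E(\eta',\eta'')$. Critical set $\mathcal C=\bigcup_{\eta\ne\eta'}\{J_\Lambda:\sum_eJ_e(\eta_e-\eta'_e)=E(\eta,\eta')\}$. For $J_\Lambda\notin\mathcal C$, $\eta\prec\eta'$ iff $E(\eta,\eta')+H_{\Lambda,J}(\eta)-H_{\Lambda,J}(\eta')<0$ (a strict total order); $\sigma(J_\Lambda)$ is the $\prec$-minimal element and $\sigma^{\pm,b}(J_\Lambda)$ the $\prec$-minimal element among $\eta$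 with $\eta_b=\pm1$. The flexibility $F_b(J_\Lambda)=\big|-\sum_{e}J_e(\sigma^{+,b}_e(J_\Lambda)-\sigma^{-,b}_e(J_\Lambda))+E(\sigma^{+,b}(J_\Lambda),\sigma^{-,b}(J_\Lambda))\big|$ on $\mathbb{R}^{\Lambda^*}\setminus\mathcal C$ extends uniquely to a continuous function on $\mathbb{R}^{\Lambda^*}$, still denoted $F_b$. Write $F_b(s)=F_b(J_\Lambda(s))$ and $\sigma(s)=\sigma(J_\Lambda(s))$ (defined when $J_\Lambda(s)\notin\mathcal C$). *)

(* Defs.v *)
From HB Require Import structures.
From mathcomp Require Import all_boot all_order all_algebra.
From mathcomp Require Import all_classical all_reals all_analysis.
Set Implicit Arguments. Unset Strict Implicit. Unset Printing Implicit Defensive.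
Import Order.TTheory GRing.Theory Num.Theory.
Local Open Scope ring_scope.

Section Model.
Variables (d : nat) (n : 'I_d -> nat).

(* The finite box Lambda = prod_i {0, ..., n i - 1} in Z^d (up to translation). *)
Definition vertex := {dffun forall i : 'I_d, 'I_(n i)}.

Definition adjacent (x y : vertex) : bool :=
  (\sum_(i < d) (maxn (x i) (y i) - minn (x i) (y i)) == 1)%N.

Definition is_edge (e : {set vertex}) : bool :=
  [exists x, exists y, adjacent x y && (e == [set x; y])].

Definition edge := {e : {set vertex} | is_edge e}.

(* spins: true <-> +1, false <-> -1 *)
Definition sgnb (b : bool) {R : numDomainType} : R := if b then 1 else -1.

(* eta_e = eta_x eta_y : +1 iff the number of -1 spins on e is even *)
Definition edgecfg (eta : {ffun vertex -> bool}) : {ffun edge -> bool} :=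
  [ffun e : edge => ~~ odd #|[set x in val e | ~~ eta x]|].

Definition SLam : {set {ffun edge -> bool}} :=
  [set edgecfg eta | eta : {ffun vertex -> bool}].

Variable R : realType.

Definition Ham (J : edge -> R) (w : {ffun edge -> bool}) : R :=
  - \sum_(e : edge) J e * sgnb (w e).

Definition E_family (E : {ffun edge -> bool} -> {ffun edge -> bool} -> R) :=
  (forall w, w \in SLam -> E w w = 0) /\
  (forall w w' w'', w \in SLam -> w' \in SLam -> w'' \in SLam ->
     E w w'' = E w w' + E w' w'').

Variable E : {ffun edge -> bool} -> {ffun edge -> bool} -> R.

Definition crit (J : edge -> R) : Prop :=
  exists w w', [/\ w \in SLam, w' \in SLam, w != w' &
     \sum_(e : edge) J e * (sgnb (w e) - sgnb (w' e)) = E w w'].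

Definition prec (J : edge -> R) (w w' : {ffun edge -> bool}) : bool :=
  E w w' + Ham J w - Ham J w' < 0.

(* the prec-minimal element of S_Lambda among those satisfying P
   (unique when J is not critical; arbitrary default otherwise) *)
Definition sigma_in (P : pred {ffun edge -> bool}) (J : edge -> R)
  : {ffun edge -> bool} :=
  odflt [ffun=> true]
    [pick w in SLam | P w &&
       [forall w', ((w' \in SLam) && P w' && (w' != w)) ==> prec J w w']].

Definition sigma (J : edge -> R) := sigma_in predT J.
(* sigma^{+,b} (pm = true) and sigma^{-,b} (pm = false) *)
Definition sigma_pm (b : edge) (pm : bool) (J : edge -> R) :=
  sigma_in (fun w => w b == pm) J.

(* the flexibility formula on R^{Lambda*} \ C *)
Definition Fform (b : edge) (J : edge -> R) : R :=
  let sp := sigma_pm b true J in let sm := sigma_pm b false J in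
  `| - \sum_(e : edge) J e * (sgnb (sp e) - sgnb (sm e)) + E sp sm |.

(* its (unique) continuous extension to R^{Lambda*}: the limit of Fform
   at J along non-critical couplings *)
Definition Flex (b : edge) (J : edge -> R) : R :=
  xget 0 [set y : R | forall eps : R, 0 < eps -> exists2 delta : R, 0 < delta &
     forall J' : edge -> R, ~ crit J' ->
       (forall e, `|J' e - J e| < delta) -> `|Fform b J' - y| < eps].

Definition Jcurve (J J' : edge -> R) (s : R) : edge -> R :=
  fun e => expR (- s) * J e + Num.sqrt (1 - expR (- (2 * s))) * J' e.

End Model.

(* Null sets of the product of standard Gaussian measures on R^I (I finite):
   sets of outer measure zero, i.e. coverable by countably many boxes of
   arbitrarily small total Gaussian mass. *)
Definition gauss_null {R : realType} (I : finType) (A : set (I -> R)) : Prop :=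
  forall eps : R, 0 < eps -> exists a b : nat -> I -> R,
    (A `<=` \bigcup_k [set x | forall i, a k i <= x i <= b k i])%classic /\
    (forall N, \sum_(k < N) \prod_(i : I)
        fine (normal_prob 0 1 (`[a k i, b k i])%classic) <= eps).

Definition pairJ {R : Type} {T : Type} (J J' : T -> R) : (T + T)%type -> R :=
  fun i => match i with inl e => J e | inr e => J' e end.

(* Main.v *)
Require Import Defs.
From HB Require Import structures.
From mathcomp Require Import all_boot all_order all_algebra.
From mathcomp Require Import all_classical all_reals all_analysis.
From mathcomp Require Import measurable_realfun.
From mathcomp Require Import ring lra zify.
Import Order.TTheory GRing.Theory Num.Theory.
Import numFieldTopology.Exports numFieldNormedType.Exports.
Local Open Scope ring_scope.
Set Implicit Arguments. Unset Strict Implicit. Unset Printing Implicit Defensive.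

Section Gauss.
Variable R : realType.
Local Notation P := (@normal_prob R 0 1).
Local Notation pk := (@normal_peak R 1).

Lemma P_fin (A : set R) : measurable A -> P A \is a fin_num.
Proof.
move=> mA; rewrite ge0_fin_numE ?measure_ge0 //.
have := @probability_le1 _ _ R (normal_prob 0 1) A mA.
by move=> h; apply: le_lt_trans h _; rewrite ltry.
Qed.

Lemma P_itv_le (a b : R) : a <= b -> fine (P `[a, b]%classic) <= (b - a) * pk.
Proof.
move=> ab.
have : (P `[a, b]%classic <= ((b - a) * pk)%:E)%E.
  rewrite /normal_prob.
  apply: (@le_trans _ _ (\int[lebesgue_measure]_(x in `[a, b]%classic) (cst pk%:E) x))%E.
    apply: ge0_le_integral => //=.
    - by move=> x _; rewrite lee_fin normal_pdf_ge0.
    - apply/measurable_EFinP; exact: (measurable_funS _ _ (measurable_normal_pdf 0 1)).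
    - by move=> x _; rewrite lee_fin; apply: normal_pdf_ub; rewrite oner_eq0.
  rewrite integral_cst //= lebesgue_measure_itv /=.
  case: ifPn => [_|]; last by rewrite mule0 lee_fin mulr_ge0 ?normal_peak_ge0 ?subr_ge0.
  by rewrite -EFinD -EFinM mulrC.
by rewrite -(fineK (P_fin _)) ?lee_fin.
Qed.

Lemma P_ge0 (A : set R) : 0 <= fine (P A).
Proof. by rewrite fine_ge0 // measure_ge0. Qed.

Lemma P_pt (a : R) : P `[a, a]%classic = 0%E.
Proof.
have h := P_itv_le (lexx a); rewrite subrr mul0r in h.
have -> : P `[a, a]%classic = (fine (P `[a, a]%classic))%:E by rewrite fineK // P_fin.
by congr (_%:E); apply/eqP; rewrite eq_le h P_ge0.
Qed.

Lemma P_itv_oc (a b : R) : a <= b ->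
  fine (P `[a, b]%classic) <= fine (P `]a, b]%classic).
Proof.
move=> ab.
have : (P `[a, b]%classic <= P `]a, b]%classic)%E.
  apply: (@le_trans _ _ (P (`[a, a]%classic `|` `]a, b]%classic))).
    apply: le_measure; rewrite ?inE //; first exact: measurableU.
    move=> x /=; rewrite !in_itv /= => /andP[ax xb].
    have [->|ax'] := eqVneq x a; first by left; rewrite lexx.
    by right; rewrite xb andbT lt_neqAle eq_sym ax' ax.
  apply: le_trans (measureU2 _ _ _) _ => //.
  by rewrite (_ : _ `[a, a]%classic = 0%E) ?add0e //; exact: P_pt.
by rewrite -(fineK (P_fin _)) // -[X in (_ <= X)%E](fineK (P_fin _)) // lee_fin.
Qed.

Lemma P_sum_itv (T : seq int) (h : R) : 0 < h -> uniq T ->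
  \sum_(t <- T) fine (P `[t%:~R * h, (t + 1)%:~R * h]%classic) <= 1.
Proof.
move=> h0 uT.
set F := fun t : int => `](t%:~R * h), ((t + 1)%:~R * h)]%classic.
apply: (@le_trans _ _ (\sum_(t <- T) fine (P (F t)))).
  apply: ler_sum => t _; apply: P_itv_oc.
  by rewrite ler_pM2r // ler_int lerDl.
have : (\sum_(t <- T) P (F t) <= 1)%E.
  rewrite (big_nth 0) big_mkord.
  have := @measure_bigsetU_ord _ _ _ P (size T) xpredT (fun i => F (nth 0 T i)).
  move=> <- //.
  - have := (@probability_le1 _ _ R (normal_prob 0 1)). move=> hh. apply: hh.
    by apply: bigsetU_measurable => i _; exact: measurable_itv.
  - by move=> i; exact: measurable_itv.
  - apply/trivIsetP => i j _ _ ij.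
    apply/seteqP; split => // x [] /=; rewrite /F /= !in_itv /= => /andP[a1 a2] /andP[b1 b2].
    have ne : nth 0 T i != nth 0 T j by rewrite nth_uniq // ?ltn_ord // (inj_eq val_inj).
    move: ne; set u := nth 0 T i; set v := nth 0 T j => ne.
    have := lt_le_trans a1 b2; have := lt_le_trans b1 a2.
    rewrite !ltr_pM2r // !ltr_int => l1 l2.
    rewrite !ltzD1 in l1 l2.
    by move: ne; rewrite eq_le l1 l2.
move=> H; rewrite -lee_fin -sumEFin.
rewrite (eq_bigr (fun t => P (F t))); first exact: H.
by move=> t _; rewrite fineK // P_fin //; exact: measurable_itv.
Qed.
End Gauss.

Section PS.
Variable R : realType.

Lemma sum_sub_fin (J : finType) (s : seq J) (G : J -> R) :
  uniq s -> (forall f, 0 <= G f) -> \sum_(f <- s) G f <= \sum_f G f.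
Proof.
move=> us G0; rewrite big_uniq //= [X in _ <= X](bigID (mem s)) /= lerDl.
exact: sumr_ge0.
Qed.

Lemma prod_sum (I : finType) (q : I -> int -> R) (S : seq {ffun I -> int})
  (T : seq int) : (forall i t, 0 <= q i t) -> uniq S -> uniq T ->
  (forall z, z \in S -> forall i, z i \in T) ->
  \sum_(z <- S) \prod_i q i (z i) <= \prod_i \sum_(t <- T) q i t.
Proof.
move=> q0 uS uT ST.
set K := size T.
pose F i (j : 'I_K.+1) := if (j < K)%N then q i (nth 0 T j) else 0.
have F0 i j : 0 <= F i j by rewrite /F; case: ifP.
have -> : \prod_i \sum_(t <- T) q i t = \prod_i \sum_(j : 'I_K.+1) F i j.
  apply: eq_bigr => i _; rewrite big_ord_recr /= {2}/F /= ltnn addr0.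
  rewrite (big_nth 0) big_mkord; apply: eq_bigr => j _.
  by rewrite /F /= ltn_ord.
rewrite bigA_distr_bigA /=.
pose phi (z : {ffun I -> int}) : {ffun I -> 'I_K.+1} :=
  [ffun i => inord (index (z i) T)].
have phiE z i : z \in S -> F i (phi z i) = q i (z i).
  move=> zS; rewrite /F ffunE inordK; last by rewrite ltnS index_size.
  by rewrite index_mem ST // nth_index // ST.
apply: (@le_trans _ _ (\sum_(f <- map phi S) \prod_i F i (f i))).
  rewrite big_map le_eqVlt; apply/orP; left; apply/eqP.
  rewrite big_seq_cond [RHS]big_seq_cond; apply: eq_bigr => z /andP[zS _].
  by apply: eq_bigr => i _; rewrite phiE.
apply: sum_sub_fin; last by move=> f; apply: prodr_ge0 => i _.
rewrite map_inj_in_uniq // => z1 z2 z1S z2S /ffunP e.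
apply/ffunP => i; have := e i; rewrite !ffunE => /(congr1 val).
rewrite /= !inordK ?ltnS ?index_size // => ei.
by rewrite -(nth_index 0 (ST _ z1S i)) ei nth_index // ST.
Qed.
End PS.

Section Hyp.
Variable R : realType.
Local Notation P := (@normal_prob R 0 1).
Local Notation pk := (@normal_peak R 1).
Lemma sum_pmap (T : countType) (Q : T -> R) (s : seq nat) :
  \sum_(k <- s) oapp Q 0 (pickle_inv k) = \sum_(z <- pmap pickle_inv s) Q z.
Proof.
elim: s => [|k s IH]; first by rewrite !big_nil.
rewrite big_cons /=; case: (pickle_inv k) => [z|] /=.
  by rewrite big_cons IH.
by rewrite add0r IH.
Qed.

Lemma gn_hyper (I : finType) (c : I -> R) (i0 : I) (kap : R) : c i0 != 0 ->
  gauss_null [set x : I -> R | \sum_i c i * x i = kap].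
Proof.
move=> ci0 eps e0.
have pk0 : 0 <= pk := normal_peak_ge0 _.
set C := (\sum_i `|c i|) / `|c i0|.
have C0 : 0 <= C by apply: divr_ge0 => //; exact: sumr_ge0.
set h := eps / (2 * C * pk + 1).
have CP0 : 0 <= 2 * C * pk by do 2 apply: mulr_ge0 => //.
have h0 : 0 < h by apply: divr_gt0 => //; lra.
set w := C * h.
have w0 : 0 <= w by apply: mulr_ge0 => //; exact: ltW.
pose ctr (z : {ffun I -> int}) :=
  (kap - \sum_(i | i != i0) c i * ((z i)%:~R * h)) / c i0.
pose A (z : {ffun I -> int}) i :=
  if i == i0 then (if z i0 == 0 then ctr z - w else 0) else (z i)%:~R * h.
pose B (z : {ffun I -> int}) i :=
  if i == i0 then (if z i0 == 0 then ctr z + w else 0) else (z i + 1)%:~R * h.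
pose zb : {ffun I -> int} := [ffun => 1].
pose zk k := odflt zb (pickle_inv k).
exists (fun k => A (zk k)), (fun k => B (zk k)); split.
  move=> x /= hx.
  pose z : {ffun I -> int} := [ffun i => if i == i0 then 0 else Num.floor (x i / h)].
  exists (pickle z) => //=.
  have zkE : zk (pickle z) = z by rewrite /zk pickleK_inv.
  have zl i : i != i0 -> (z i)%:~R * h <= x i <= (z i + 1)%:~R * h.
    move=> ii0; rewrite /z ffunE (negbTE ii0).
    rewrite -ler_pdivlMr // -[X in _ && X]ler_pdivrMr //.
    by rewrite floor_le ltW // floorD1_gt.
  move=> j; rewrite zkE /A /B.
  case: eqP => [->|/eqP ii0]; last by apply: zl.
  rewrite /z ffunE eqxx /=.
  have ex : x i0 - ctr z = (\sum_(i | i != i0) c i * ((z i)%:~R * h - x i)) / c i0.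
    have e : x i0 * c i0 = kap - \sum_(i | i != i0) c i * x i.
      by rewrite -hx (bigD1 i0) //= mulrC addrK.
    rewrite /ctr; apply: (mulIf ci0); rewrite mulrBl !divfK // e.
    under [X in _ = X]eq_bigr do rewrite mulrBr.
    rewrite sumrB; lra.
  rewrite -ler_distl ex normrM normfV.
  have hz i : i != i0 -> `|(z i)%:~R * h - x i| <= h.
    move=> /zl /andP[l1 l2]; rewrite distrC ger0_norm ?subr_ge0 //.
    rewrite intrD mulrDl mul1r in l2; lra.
  rewrite /w /C mulrAC ler_pM2r ?invr_gt0 ?normr_gt0 //.
  apply: le_trans (ler_norm_sum _ _ _) _.
  rewrite mulr_suml [X in _ <= X](bigD1 i0) //= -[X in X <= _]add0r.
  apply: lerD; first by apply: mulr_ge0 => //; exact: ltW.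
  apply: ler_sum => i ii0; rewrite normrM; apply: ler_wpM2l => //; exact: hz.
move=> N.
pose qq i (t : int) := if i == i0 then (t == 0)%:R
  else fine (P `[t%:~R * h, (t + 1)%:~R * h]%classic).
have qq0 i t : 0 <= qq i t by rewrite /qq; case: ifP => _ //; exact: P_ge0.
have mass z : \prod_i fine (P `[A z i, B z i]%classic) <= (2 * w * pk) * \prod_i qq i (z i).
  rewrite (bigD1 i0) // [X in _ <= _ * X](bigD1 i0) //= mulrA.
  apply: ler_pM.
  - exact: P_ge0.
  - by apply: prodr_ge0 => i _; exact: P_ge0.
  - rewrite /A /B /qq !eqxx; case: eqP => _.
      apply: le_trans (P_itv_le _) _; first lra.
      by rewrite mulr1; apply: ler_wpM2r => //; lra.
    by apply: le_trans (P_itv_le (lexx 0)) _; rewrite subrr !mul0r mulr0.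
  - apply: ler_prod => i ii0; rewrite /A /B /qq (negbTE ii0) P_ge0 lexx //.
have key : 2 * w * pk <= eps.
  rewrite /w /h; set X := 2 * C * pk.
  have -> : 2 * (C * (eps / (X + 1))) * pk = (X * eps) / (X + 1) by rewrite /X; ring.
  have Xp : 0 < X + 1 by rewrite /X; lra.
  rewrite ler_pdivrMr //; rewrite /X in Xp *; nra.
apply: (@le_trans _ _ (\sum_(k < N) (2 * w * pk) * \prod_i qq i (zk k i))).
  by apply: ler_sum => k _; exact: mass.
rewrite -mulr_sumr -[X in _ <= X]mulr1; apply: ler_pM => //.
- by apply: mulr_ge0 => //; apply: mulr_ge0.
- by apply: sumr_ge0 => k _; apply: prodr_ge0.
pose Qz (z : {ffun I -> int}) := \prod_i qq i (z i).
have -> : \sum_(k < N) \prod_i qq i (zk k i) = \sum_(k <- iota 0 N) oapp Qz 0 (pickle_inv k).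
  rewrite -(big_mkord xpredT (fun k => \prod_i qq i (zk k i))) /index_iota subn0.
  apply: eq_bigr => k _; rewrite /zk; case: (pickle_inv k) => [z|] //=.
  rewrite (bigD1 i0) //= /qq eqxx /zb ffunE /=; by rewrite mul0r.
rewrite sum_pmap.
set S := pmap pickle_inv (iota 0 N).
pose T0 := flatten (map (fun z : {ffun I -> int} => map z (enum I)) S).
apply: le_trans (prod_sum (S := S) (T := undup T0) qq0 _ _ _) _.
- by apply: pmap_uniq (iota_uniq 0 N); exact: pickle_invK.
- exact: undup_uniq.
- move=> z zS i; rewrite mem_undup; apply/flattenP; exists (map z (enum I)).
    exact: (map_f _ zS).
  by apply: map_f; rewrite mem_enum.
apply: prodr_ile1 => i _; rewrite sumr_ge0 //=.
rewrite /qq; case: eqP => _; last by apply: P_sum_itv => //; exact: undup_uniq.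
have uU : uniq (undup T0) := undup_uniq T0.
move: uU; set U := undup T0 => uU.
case: (boolP (0 \in U)) => [/perm_to_rem pe|n0].
  rewrite (perm_big _ pe) big_cons eqxx big1_seq; first by rewrite /= addr0.
  move=> t /andP[_ tin].
  case: eqP tin => // ->; by rewrite mem_rem_uniqF.
rewrite big1_seq // => t /andP[_ tin].
by case: eqP tin => // ->; rewrite (negbTE n0).
Qed.
End Hyp.

Section Mnl.
Variable R : realType.
Definition mnl (T : Type) (f : T -> R) (x0 : T) (s : seq T) :=
  foldr (fun w acc => Num.min (f w) acc) (f x0) s.

Lemma mnl_le (T : eqType) (f : T -> R) x0 s w : w \in x0 :: s -> mnl f x0 s <= f w.
Proof.
elim: s => [|y s IH]; first by rewrite inE => /eqP ->.
have -> : mnl f x0 (y :: s) = Num.min (f y) (mnl f x0 s) by [].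
rewrite ge_min !inE => /or3P[/eqP e|/eqP e|ws].
- by apply/orP; right; apply: IH; rewrite inE e eqxx.
- by rewrite e lexx.
- by apply/orP; right; apply: IH; rewrite inE ws orbT.
Qed.

Lemma mnl_in (T : eqType) (f : T -> R) x0 s :
  exists2 w, w \in x0 :: s & mnl f x0 s = f w.
Proof.
elim: s => [|y s [u us IH]]; first by exists x0; rewrite ?inE.
have -> : mnl f x0 (y :: s) = Num.min (f y) (mnl f x0 s) by [].
case: (leP (f y) (mnl f x0 s)) => h.
  by exists y; rewrite ?inE ?eqxx ?orbT.
exists u; last by [].
by move: us; rewrite !inE => /orP[->|->]; rewrite ?orbT.
Qed.

Lemma mnl_lip (T : eqType) (f g : T -> R) x0 s r :
  (forall w, `|f w - g w| <= r) -> `|mnl f x0 s - mnl g x0 s| <= r.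
Proof.
move=> H; have [u us eu] := mnl_in g x0 s; have [v vs ev] := mnl_in f x0 s.
have h1 := mnl_le f us; have h2 := mnl_le g vs.
have := H u; have := H v; rewrite !ler_norml => /andP[a1 a2] /andP[b1 b2].
apply/andP; split; lra.
Qed.
End Mnl.

Section GN.
Variable R : realType.
Variable I : finType.

Lemma gn_sub (A B : set (I -> R)) : (A `<=` B)%classic -> gauss_null B -> gauss_null A.
Proof.
move=> AB nB eps e0; have [a [b' [cov S]]] := nB eps e0.
by exists a, b'; split => // x /AB /cov.
Qed.

Lemma sum_double (F : nat -> R) N :
  \sum_(k < N.*2) F k = \sum_(k < N) (F k.*2 + F k.*2.+1).
Proof.
elim: N => [|N IH]; first by rewrite !big_ord0.
by rewrite doubleS !big_ord_recr /= IH addrA.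
Qed.

Lemma gn_U (A B : set (I -> R)) : gauss_null A -> gauss_null B -> gauss_null (A `|` B)%classic.
Proof.
move=> nA nB eps e0.
have e2 : 0 < eps / 2 by apply: divr_gt0.
have [a1 [b1 [c1 S1]]] := nA _ e2; have [a2 [b2 [c2 S2]]] := nB _ e2.
exists (fun k => if odd k then a2 k./2 else a1 k./2), (fun k => if odd k then b2 k./2 else b1 k./2).
split.
  move=> x [/c1 [k _ hk]|/c2 [k _ hk]].
    by exists k.*2 => //=; rewrite odd_double doubleK.
  by exists k.*2.+1 => //=; rewrite odd_double /= uphalf_double.
move=> N.
set F := fun k => \prod_i fine (normal_prob 0 1 `[(if odd k then a2 k./2 else a1 k./2) i,
   (if odd k then b2 k./2 else b1 k./2) i]%classic).
have F0 k : 0 <= F k by apply: prodr_ge0 => i _; rewrite fine_ge0 // measure_ge0.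
apply: (@le_trans _ _ (\sum_(k < N.*2) F k)).
  rewrite -!(big_mkord xpredT) (@big_cat_nat _ _ _ N 0 N.*2) //=; last by rewrite -addnn leq_addr.
  rewrite -[X in X <= _](big_mkord xpredT F) lerDl.
  by apply: sumr_ge0 => k _.
rewrite sum_double big_split /=.
have -> : eps = eps / 2 + eps / 2 by clear; lra.
apply: lerD.
  apply: le_trans (S1 N); apply: ler_sum => k _.
  by rewrite /F odd_double doubleK.
apply: le_trans (S2 N); apply: ler_sum => k _.
by rewrite /F /= odd_double /= uphalf_double.
Qed.

Lemma gn_list (T : eqType) (Q : T -> set (I -> R)) (s : seq T) :
  gauss_null (set0 : set (I -> R)) -> (forall p, gauss_null (Q p)) ->
  gauss_null [set x | exists p, p \in s /\ Q p x]%classic.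
Proof.
move=> g0 gQ; elim: s => [|p s IH].
  by apply: gn_sub g0 => x [p []].
apply: gn_sub (gn_U (gQ p) IH) => x [q []]; rewrite inE => /orP[/eqP -> Qx|qs Qx].
  by left.
by right; exists q.
Qed.
End GN.

Lemma bits_lt N (f : 'I_N -> bool) : (\sum_(i < N) f i * 2 ^ i < 2 ^ N)%N.
Proof.
elim: N f => [|N IH] f; first by rewrite big_ord0.
rewrite big_ord_recr /= expnS.
have := IH (fun i => f (widen_ord (leqnSn N) i)).
case: (f ord_max) => /=; lia.
Qed.

Lemma bits_inj N (f g : 'I_N -> bool) :
  (\sum_(i < N) f i * 2 ^ i = \sum_(i < N) g i * 2 ^ i)%N -> f =1 g.
Proof.
elim: N f g => [|N IH] f g; first by move=> _ [].
rewrite !big_ord_recr /=.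
have lf := bits_lt (fun i => f (widen_ord (leqnSn N) i)).
have lg := bits_lt (fun i => g (widen_ord (leqnSn N) i)).
move=> e.
have eM : f ord_max = g ord_max.
  move: e lf lg; case: (f ord_max); case: (g ord_max) => //=; lia.
rewrite eM in e; have e' := addIn e.
have IH' := IH _ _ e'.
move=> j; case: (unliftP ord_max j) => [i ->|->] //.
have -> : lift ord_max i = widen_ord (leqnSn N) i by apply: val_inj; rewrite /= /bump leqNgt ltn_ord.
exact: IH'.
Qed.

Lemma L1 (R : realType) (a b x y : R) : a - x = b - y -> a - b = x - y.
Proof. lra. Qed.
Lemma L2 (R : realType) (p q M : R) : p <= M -> q <= M -> p + q <= 2 * M.
Proof. lra. Qed.
Lemma L3 (R : realType) (g : R) : 0 < g -> g <= g / 2 -> False.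
Proof. lra. Qed.

Lemma L4 (R : realType) (M eps : R) : 0 <= M -> 0 < eps -> 2 * (M * (eps / (2 * M + 1))) < eps.
Proof.
move=> M0 e0; have D0 : 0 < 2 * M + 1 by lra.
rewrite (_ : 2 * (M * (eps / (2 * M + 1))) = (2 * M * eps) / (2 * M + 1)); last by rewrite !mulrA.
rewrite ltr_pdivrMr //; nra.
Qed.
Lemma L5 (R : realType) (t : R) : 0 < t -> t < 2 * (t / 3) -> False.
Proof. lra. Qed.

Section Cont.
Variable R : realType.
Lemma cont_e : continuous (fun s : R => expR (- s)).
Proof.
move=> x; apply: (@continuous_comp _ _ _ (fun s : R => - s) expR).
  by move=> y; apply: (@continuousN _ R^o R^o id).
exact: continuous_expR.
Qed.

Lemma cont_sq : continuous (fun s : R => Num.sqrt (1 - expR (- (2 * s)))).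
Proof.
move=> x; apply: (@continuous_comp _ _ _ (fun s : R => 1 - expR (- (2 * s))) Num.sqrt); last exact: sqrt_continuous.
apply: (@continuousB _ R^o R^o (fun=> 1) (fun s => expR (- (2 * s)))).
  exact: cst_continuous.
apply: (@continuous_comp _ _ _ (fun s : R => - (2 * s)) expR); last exact: continuous_expR.
apply: (@continuousN _ R^o R^o (fun s => 2 * s)).
apply: (@continuousM _ R^o (fun=> 2) (fun s => s)); first exact: cst_continuous.
done.
Qed.

Lemma cont_lin (a b c : R) :
  continuous (fun s : R => expR (- s) * a + Num.sqrt (1 - expR (- (2 * s))) * b - c).
Proof.
move=> x.
apply: (@continuousB _ R^o R^o (fun s => expR (- s) * a + Num.sqrt (1 - expR (- (2 * s))) * b) (fun=> c)); last exact: cst_continuous.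
apply: (@continuousD _ R^o R^o (fun s => expR (- s) * a) (fun s => Num.sqrt (1 - expR (- (2 * s))) * b)).
  apply: (@continuousM _ R^o (fun s => expR (- s)) (fun=> a)); [exact: cont_e | exact: cst_continuous].
apply: (@continuousM _ R^o (fun s => Num.sqrt (1 - expR (- (2 * s)))) (fun=> b)); [exact: cont_sq | exact: cst_continuous].
Qed.

Lemma mnl_cont (T : Type) (F : R -> T -> R) x0 s :
  (forall w, continuous (fun t => F t w)) -> continuous (fun t => mnl (F t) x0 s).
Proof.
move=> cF; elim: s => [|w s IH] /=; first exact: cF.
move=> x; apply: (@continuous_min _ _ (fun t => F t w) (fun t => mnl (F t) x0 s)).
  exact: cF.
exact: IH.
Qed.
End Cont.

Section Model2.
Variables (R : realType) (d : nat) (n : 'I_d -> nat).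
Variable (E : {ffun edge n -> bool} -> {ffun edge n -> bool} -> R).
Hypothesis HE : E_family E.
Variable b : edge n.
Local Notation W := {ffun edge n -> bool}.
Local Notation SL := (SLam n).

Definition w0 : W := edgecfg [ffun=> true].
Definition phi (w : W) := E w0 w.
Definition G (J : edge n -> R) (w : W) := Ham J w - phi w.

Lemma w0S : w0 \in SL.
Proof. by apply/imsetP; exists [ffun=> true]. Qed.

Lemma Eeq w w' : w \in SL -> w' \in SL -> E w w' = phi w' - phi w.
Proof.
move=> wS w'S; case: HE => _ H; have := H w0 w w' w0S wS w'S.
rewrite /phi => ->; ring.
Qed.

Lemma keyid J w w' : w \in SL -> w' \in SL ->
  \sum_e J e * (sgnb (w e) - sgnb (w' e)) - E w w' = G J w' - G J w.
Proof.
move=> wS w'S; rewrite Eeq // /G /Ham.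
under eq_bigr do rewrite mulrBr.
rewrite sumrB; ring.
Qed.

Lemma precG J w w' : w \in SL -> w' \in SL -> prec E J w w' = (G J w < G J w').
Proof.
move=> wS w'S; rewrite /prec Eeq // -[RHS]subr_lt0; congr (_ < 0).
rewrite /G; ring.
Qed.

Lemma critP J : crit E J <->
  exists w w', [/\ w \in SL, w' \in SL, w != w' & G J w = G J w'].
Proof.
split=> [[w [w' [wS w'S ne e]]]|[w [w' [wS w'S ne e]]]]; exists w, w'; split => //.
  by have := keyid J wS w'S; rewrite e subrr; lra.
by have := keyid J wS w'S; rewrite e subrr; lra.
Qed.

Lemma Ginj J w w' : ~ crit E J -> w \in SL -> w' \in SL -> w != w' -> G J w != G J w'.
Proof.
move=> nc wS w'S ne; apply/eqP => e; apply: nc; apply/critP.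
by exists w, w'.
Qed.

Lemma exists_w1 : exists2 w1 : W, w1 \in SL & w1 b = false.
Proof.
have /existsP[x /existsP[y /andP[adj /eqP eb]]] := valP b.
have xy : x != y.
  apply/eqP => exy; move: adj; rewrite exy /adjacent.
  by rewrite /Defs.adjacent big1 // => i _; rewrite maxnn minnn subnn.
exists (edgecfg [ffun v => v != x]); first by apply/imsetP; eexists.
rewrite /edgecfg ffunE eb.
have -> : [set v in [set x; y] | ~~ [ffun v => v != x] v] = [set x].
  apply/setP => v; rewrite !inE ffunE negbK.
  by case: eqP => [->|]; rewrite ?eqxx ?andbF.
by rewrite cards1.
Qed.

Lemma exists_w1' : exists w : W, (w \in SL) && (w b == false).
Proof. by have [w ? ?] := exists_w1; exists w; apply/andP; split => //; apply/eqP. Qed.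

Definition w1 : W := xchoose exists_w1'.
Lemma w1S : w1 \in SL. Proof. by have /andP[] := xchooseP exists_w1'. Qed.
Lemma w1b : w1 b = false. Proof. by have /andP[_ /eqP] := xchooseP exists_w1'. Qed.
Lemma w0b : w0 b = true.
Proof.
rewrite /w0 /edgecfg ffunE.
have -> : [set v in val b | ~~ [ffun=> true] v] = finset.set0.
  by apply/setP => v; rewrite !inE ffunE andbF.
by rewrite cards0.
Qed.

Definition anc (pm : bool) : W := if pm then w0 else w1.
Lemma ancS pm : anc pm \in SL. Proof. by case: pm; [exact: w0S|exact: w1S]. Qed.
Lemma ancb pm : anc pm b = pm. Proof. by case: pm; [exact: w0b|exact: w1b]. Qed.
Definition Lp (pm : bool) := [seq w : W <- enum SL | w b == pm].
Lemma memL pm w : (w \in anc pm :: Lp pm) = (w \in SL) && (w b == pm).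
Proof.
rewrite inE mem_filter mem_enum andbC.
by case: eqVneq => [->|_] //=; rewrite ancS ancb eqxx.
Qed.

Definition m (J : edge n -> R) pm := mnl (G J) (anc pm) (Lp pm).
Lemma m_le J pm w : w \in SL -> w b = pm -> m J pm <= G J w.
Proof. by move=> wS wb; apply: mnl_le; rewrite memL wS wb eqxx. Qed.
Lemma m_in J pm : exists2 w, (w \in SL) && (w b == pm) & m J pm = G J w.
Proof. by have [w] := mnl_in (G J) (anc pm) (Lp pm); rewrite memL; exists w. Qed.

Lemma sigma_spec (P : pred W) J x0 : ~ crit E J -> x0 \in SL -> P x0 ->
  [/\ sigma_in E P J \in SL, P (sigma_in E P J) &
   forall w, w \in SL -> P w -> w != sigma_in E P J -> G J (sigma_in E P J) < G J w].
Proof.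
move=> nc x0S Px0; rewrite /sigma_in; case: pickP => [s /andP[sS /andP[Ps /forallP H]]|none] /=.
  split=> // w wS Pw ws; have := H w; rewrite wS Pw ws /= precG //.
exfalso.
pose l := [seq w : W <- enum SL | P w].
have [u uin ue] := mnl_in (G J) x0 l.
have uSP : (u \in SL) && P u.
  move: uin; rewrite inE mem_filter mem_enum andbC.
  by case: eqVneq => [->|_] //=; rewrite x0S Px0.
case/andP: uSP => uS Pu.
have := none u; rewrite uS Pu /=; move/negP; apply; apply/forallP => w'.
apply/implyP => /andP[/andP[w'S Pw'] ne]; rewrite precG // lt_neqAle.
rewrite Ginj // 1?eq_sym //= -ue; apply: mnl_le.
by rewrite inE mem_filter mem_enum Pw' w'S orbT.
Qed.


Lemma sigma_b J : ~ crit E J -> sigma E J b = (m J true < m J false).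
Proof.
move=> nc; have [sS _ H] := sigma_spec (P := predT) nc w0S isT.
rewrite /sigma; set s := sigma_in E predT J in sS H *.
have smin w : w \in SL -> G J s <= G J w.
  by move=> wS; case: (eqVneq w s) => [->//|ne]; apply: ltW; apply: H.
have meq pm : s b = pm -> m J pm = G J s.
  move=> sb; apply/eqP; rewrite eq_le m_le //=.
  by have [w /andP[wS _] ->] := m_in J pm; apply: smin.
have mlt pm : s b != pm -> G J s < m J pm.
  move=> sb; have [v /andP[vS /eqP vb] ->] := m_in J pm; apply: H => //.
  by apply/eqP => e; move: sb; rewrite -e vb eqxx.
case sb: (s b).
  by rewrite (meq true sb) mlt // sb.
by rewrite (meq false sb) ltNge ltW // mlt // sb.
Qed.

Lemma mpm J pm : ~ crit E J -> m J pm = G J (sigma_pm E b pm J).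
Proof.
move=> nc; have [sS /eqP sb H] := sigma_spec (P := fun w => w b == pm) nc (ancS pm) (introT eqP (ancb pm)).
rewrite /sigma_pm; set s := sigma_in E _ J in sS sb H *.
apply/eqP; rewrite eq_le m_le //=.
have [w /andP[wS /eqP wb] ->] := m_in J pm.
by case: (eqVneq w s) => [->//|ne]; apply: ltW; apply: H => //; rewrite wb.
Qed.

Definition Fc J := `|m J true - m J false|.

Lemma Fform_eq J : ~ crit E J -> Fform E b J = Fc J.
Proof.
move=> nc; rewrite /Fform /Fc (mpm true nc) (mpm false nc).
have [spS _ _] := sigma_spec (P := fun w => w b == true) nc (ancS true) (introT eqP (ancb true)).
have [smS _ _] := sigma_spec (P := fun w => w b == false) nc (ancS false) (introT eqP (ancb false)).
have := keyid J spS smS; rewrite /sigma_pm => k.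
congr (`|_|); lra.
Qed.

Lemma G_lip J J' r w : (forall e, `|J' e - J e| <= r) ->
  `|G J' w - G J w| <= #|{: edge n}|%:R * r.
Proof.
move=> H.
have -> : G J' w - G J w = - \sum_e (J' e - J e) * sgnb (w e).
  rewrite /G /Ham; under [X in _ = - X]eq_bigr do rewrite mulrBl.
  rewrite sumrB; ring.
rewrite normrN; apply: le_trans (ler_norm_sum _ _ _) _.
apply: (@le_trans _ _ (\sum_(e : edge n) r)).
  apply: ler_sum => e _; rewrite normrM.
  by rewrite /sgnb; case: (w e); rewrite ?normrN normr1 mulr1.
by rewrite sumr_const mulr_natl.
Qed.

Lemma Fc_lip J J' r : (forall e, `|J' e - J e| <= r) ->
  `|Fc J' - Fc J| <= 2 * (#|{: edge n}|%:R * r).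
Proof.
move=> H.
have h pm : `|m J' pm - m J pm| <= #|{: edge n}|%:R * r.
  by apply: mnl_lip => w; apply: G_lip.
rewrite /Fc; apply: le_trans (ler_dist_dist _ _) _.
have := h true; have := h false; rewrite !ler_norml => /andP[a1 a2] /andP[b1 b2].
apply/andP; split; lra.
Qed.

Definition u (e : edge n) : R := (2 ^ enum_rank e)%:R.
Definition U (w : W) := \sum_e u e * sgnb (w e).

Lemma sgnbE (x : bool) : sgnb x = 2 * (x : nat)%:R - 1 :> R.
Proof. by case: x; rewrite /sgnb /= ?mulr1n ?mulr0n; lra. Qed.

Lemma Uinj w w' : U w = U w' -> w = w'.
Proof.
have key v : U v = 2 * ((\sum_(j < #|{: edge n}|) v (enum_val j) * 2 ^ j)%N)%:R - \sum_e u e.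
  have -> : U v = \sum_e (2 * (u e * (v e : nat)%:R) - u e).
    by apply: eq_bigr => e _; rewrite sgnbE mulrBr mulr1 mulrCA.
  rewrite sumrB -mulr_sumr natr_sum; congr (2 * _ - _).
  rewrite [LHS](reindex (enum_val : 'I_#|{: edge n}| -> edge n)) /=; last by apply: onW_bij; exact: enum_val_bij.
  by apply: eq_bigr => j _; rewrite /u enum_valK natrM mulrC.
rewrite !key => /addIr e.
have h2 : 2 != 0 :> R by rewrite pnatr_eq0.
move: (mulfI h2 e) => /eqP; rewrite eqr_nat => /eqP /bits_inj H.
by apply/ffunP => e'; rewrite -(enum_rankK e'); apply: H.
Qed.

Lemma u_ge0 e : 0 <= u e. Proof. exact: ler0n. Qed.

Lemma dense J (del : R) : 0 < del ->
  exists J', ~ crit E J' /\ forall e, `|J' e - J e| < del.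
Proof.
move=> d0.
set Umax := \sum_e u e.
have Um0 : 0 <= Umax by apply: sumr_ge0 => e _; exact: u_ge0.
have ule e : u e <= Umax.
  by rewrite /Umax (bigD1 e) //= lerDl; apply: sumr_ge0 => i _; exact: u_ge0.
have Ule w : `|U w| <= Umax.
  apply: le_trans (ler_norm_sum _ _ _) _; apply: ler_sum => e _.
  rewrite normrM ger0_norm ?u_ge0 //.
  by rewrite /sgnb; case: (w e); rewrite ?normrN normr1 mulr1.
pose gf (p : W * W) := if G J p.1 == G J p.2 then 1 else `|G J p.1 - G J p.2|.
set g := mnl gf (w0, w0) (enum {: W * W}).
have g0 : 0 < g.
  rewrite /g; have [v _ ->] := mnl_in gf (w0, w0) (enum {: W * W}).
  rewrite /gf; case: eqP => // /eqP ne; by rewrite normr_gt0 subr_eq0.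
have gle w w' : G J w != G J w' -> g <= `|G J w - G J w'|.
  move=> ne; have := @mnl_le _ _ gf (w0, w0) (enum {: W * W}) (w, w').
  by rewrite inE mem_enum orbT /gf /= (negbTE ne) => /(_ isT).
set K := 2 * Umax + 1.
have K0 : 0 < K by rewrite /K; lra.
set tau := Num.min (del / (Umax + 1)) (g / K) / 2.
have tau0 : 0 < tau.
  rewrite /tau divr_gt0 // lt_min !divr_gt0 //; lra.
have tau1 : tau * (Umax + 1) < del.
  rewrite -ltr_pdivlMr; last lra.
  apply: (@lt_le_trans _ _ (Num.min (del / (Umax + 1)) (g / K))).
    by rewrite /tau ltr_pdivrMr // ltr_pMr // ?lt_min ?divr_gt0 //; lra.
  by rewrite ge_min lexx.
have tau2 : tau * K <= g / 2.
  have t3 : tau <= g / K / 2 by rewrite /tau ler_pM2r ?invr_gt0 // ge_min lexx orbT.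
  have e3 : g / K / 2 * K = g / 2.
    by rewrite mulrAC -[g / K * K]mulrA mulVf ?mulr1 // gt_eqF.
  by rewrite -e3 ler_pM2r.
exists (fun e => J e + tau * u e); split; last first.
  move=> e; rewrite addrC addKr ger0_norm; last by apply: mulr_ge0; [exact: ltW|exact: u_ge0].
  apply: le_lt_trans tau1; rewrite ler_pM2l //; apply: le_trans (ule e) _; by rewrite lerDl ler01.
have GJ' w : G (fun e => J e + tau * u e) w = G J w - tau * U w.
  rewrite /G /Ham /U; under eq_bigr do rewrite mulrDl -mulrA.
  rewrite big_split -mulr_sumr /= opprD; exact: addrAC.
move/critP => [w [w' [wS w'S ne]]]; rewrite !GJ' => e.
have eD : G J w - G J w' = tau * (U w - U w') by rewrite mulrBr; apply: L1.
case: (eqVneq (G J w) (G J w')) => h.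
  move: eD; rewrite h subrr => /esym /eqP; rewrite mulf_eq0 (gt_eqF tau0) /= subr_eq0.
  by move=> /eqP /Uinj; apply/eqP.
have := gle _ _ h; rewrite eD normrM (ger0_norm (ltW tau0)) => H.
have H2 : `|U w - U w'| <= 2 * Umax.
  by apply: le_trans (ler_normB _ _) _; apply: L2.
have H3 : tau * `|U w - U w'| <= tau * K.
  by rewrite ler_pM2l //; apply: le_trans H2 _; rewrite /K lerDl.
exact: (L3 g0 (le_trans H (le_trans H3 tau2))).
Qed.

Lemma Flex_eq J : Flex E b J = Fc J.
Proof.
set M := (#|{: edge n}|%:R : R).
have M0 : 0 <= M by exact: ler0n.
have near eps : 0 < eps -> forall J', (forall e, `|J' e - J e| < eps / (2 * M + 1)) ->
    `|Fc J' - Fc J| < eps.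
  move=> e0 J' H; apply: le_lt_trans (L4 M0 e0).
  by apply: Fc_lip => e; apply: ltW.
have ex : exists y : R, [set y : R | forall eps : R, 0 < eps -> exists2 delta : R, 0 < delta &
     forall J' : edge n -> R, ~ crit E J' ->
       (forall e, `|J' e - J e| < delta) -> `|Fform E b J' - y| < eps]%classic y.
  exists (Fc J) => eps e0; exists (eps / (2 * M + 1)).
    by apply: divr_gt0 => //; apply: ltr_wpDl; [apply: mulr_ge0|].
  by move=> J' nc H; rewrite Fform_eq //; apply: near.
have := xgetPex 0 ex; rewrite /Flex; set y := xget 0 _ => Hy.
apply/eqP; apply/negPn/negP => ne.
have t0 : 0 < `|y - Fc J| by rewrite normr_gt0 subr_eq0.
set eps := `|y - Fc J| / 3.
have e0 : 0 < eps by apply: divr_gt0.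
have [d1 d10 Hd1] := Hy eps e0.
have d20 : 0 < eps / (2 * M + 1) by apply: divr_gt0 => //; apply: ltr_wpDl; [apply: mulr_ge0|].
set d2 := eps / (2 * M + 1) in d20.
have dm : 0 < Num.min d1 d2 by rewrite lt_min d10 d20.
have [J' [nc HJ']] := dense J dm.
have m1 : Num.min d1 d2 <= d1 by rewrite ge_min lexx.
have m2 : Num.min d1 d2 <= d2 by rewrite ge_min lexx orbT.
have h1 := Hd1 J' nc (fun e => lt_le_trans (HJ' e) m1).
have h2 := near eps e0 J' (fun e => lt_le_trans (HJ' e) m2).
rewrite Fform_eq // distrC in h1.
apply: (L5 t0); apply: le_lt_trans (ler_distD (Fc J') y (Fc J)) _.
have -> : 2 * (`|y - Fc J| / 3) = eps + eps by rewrite /eps mulrDl !mul1r.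
exact: ltrD.
Qed.

Lemma Jc0 (J J' : edge n -> R) : Jcurve J J' 0 = J.
Proof.
apply: funext => e; rewrite /Jcurve oppr0 expR0 mulr0 oppr0 expR0 subrr sqrtr0.
by rewrite mul0r mul1r addr0.
Qed.

Lemma GJc (J J' : edge n -> R) w s : G (Jcurve J J' s) w =
  expR (- s) * Ham J w + Num.sqrt (1 - expR (- (2 * s))) * Ham J' w - phi w.
Proof.
rewrite /G /Ham /Jcurve; under eq_bigr do rewrite mulrDl -!mulrA.
by rewrite big_split -!mulr_sumr /= opprD -!mulrN.
Qed.

Definition hh (J J' : edge n -> R) (s : R) := m (Jcurve J J' s) true - m (Jcurve J J' s) false.

Lemma hh_cont (J J' : edge n -> R) : continuous (hh J J').
Proof.
have cm pm : continuous (fun s => m (Jcurve J J' s) pm).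
  apply: (@mnl_cont R W (fun s w => G (Jcurve J J' s) w)) => w.
  have -> : (fun t => G (Jcurve J J' t) w) = (fun t => expR (- t) * Ham J w +
      Num.sqrt (1 - expR (- (2 * t))) * Ham J' w - phi w).
    by apply: funext => t; rewrite GJc.
  exact: cont_lin.
move=> x; apply: (@continuousB _ R^o R^o (fun s => m (Jcurve J J' s) true) (fun s => m (Jcurve J J' s) false)).
  exact: cm.
exact: cm.
Qed.

Lemma main_det (J J' : edge n -> R) : ~ crit E J -> forall t : R, 0 <= t ->
  (forall s : R, 0 <= s <= t -> 0 < Flex E b (Jcurve J J' s)) ->
  forall s : R, 0 <= s <= t -> ~ crit E (Jcurve J J' s) ->
    sigma E (Jcurve J J' s) b = sigma E J b.
Proof.
move=> nc t t0 Hpos s /andP[s0 st] ncs.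
have hne x : 0 <= x <= t -> hh J J' x != 0.
  move=> xt; have := Hpos x xt; rewrite Flex_eq /Fc normr_gt0 //.
rewrite (sigma_b ncs) (sigma_b nc) -{3 4}(Jc0 J J').
rewrite -[LHS]subr_lt0 -[RHS]subr_lt0 -/(hh J J' s) -/(hh J J' 0).
have cont : continuous (from_subspace `[0, s]%classic (hh J J')).
  by apply: continuous_subspaceT; exact: hh_cont.
have h0 := hne 0 (introT andP (conj (lexx 0) t0)).
have hs := hne s (introT andP (conj s0 st)).
have nz c : c \in `[0, s] -> hh J J' c != 0.
  rewrite in_itv /= => /andP[c0 cs]; apply: hne; rewrite c0 /=; exact: le_trans cs st.
have sw1 : hh J J' 0 < 0 -> 0 < hh J J' s -> False.
  move=> a1 a2.
  have : Num.min (hh J J' 0) (hh J J' s) <= 0 <= Num.max (hh J J' 0) (hh J J' s).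
    by rewrite ge_min le_max (ltW a1) (ltW a2) orbT.
  case/(IVT s0 cont) => c cin hc.
  by move: (nz c cin); rewrite hc eqxx.
have sw2 : 0 < hh J J' 0 -> hh J J' s < 0 -> False.
  move=> a1 a2.
  have : Num.min (hh J J' 0) (hh J J' s) <= 0 <= Num.max (hh J J' 0) (hh J J' s).
    by rewrite ge_min le_max (ltW a1) (ltW a2) orbT.
  case/(IVT s0 cont) => c cin hc.
  by move: (nz c cin); rewrite hc eqxx.
apply/idP/idP => H.
  case: (ltgtP (hh J J' 0) 0) => // h0'.
    by case: (sw2 h0' H).
  by move: h0; rewrite h0' eqxx.
case: (ltgtP (hh J J' s) 0) => // hs'.
  by case: (sw1 H hs').
by move: hs; rewrite hs' eqxx.
Qed.
End Model2.


Theorem proposition2p9 (R : realType) (d : nat) (n : 'I_d -> nat)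
  (E : {ffun edge n -> bool} -> {ffun edge n -> bool} -> R)
  (HE : E_family E) (b : edge n) :
  exists N : set (edge n + edge n -> R), gauss_null N /\
  forall J J' : edge n -> R, ~ N (pairJ J J') ->
    ~ crit E J /\
    forall t : R, 0 <= t ->
      (forall s : R, 0 <= s <= t -> 0 < Flex E b (Jcurve J J' s)) ->
      forall s : R, 0 <= s <= t -> ~ crit E (Jcurve J J' s) ->
        sigma E (Jcurve J J' s) b = sigma E J b.
Proof.
pose N := [set x : edge n + edge n -> R | crit E (fun e => x (inl e))]%classic.
exists N; split; last first.
  move=> J J' nN; split; first exact: nN.
  exact: (main_det HE).
have g0 : gauss_null (set0 : set (edge n + edge n -> R)).
  have H := @gn_hyper R (edge n + edge n)%type (fun=> 1) (inl b) 0 (oner_neq0 R).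
  by apply: gn_sub H => x.
pose Q (p : {ffun edge n -> bool} * {ffun edge n -> bool}) :=
  [set x : edge n + edge n -> R | [/\ p.1 \in SLam n, p.2 \in SLam n, p.1 != p.2 &
     \sum_e x (inl e) * (sgnb (p.1 e) - sgnb (p.2 e)) = E p.1 p.2]]%classic.
apply: (gn_sub _ (@gn_list R _ _ Q (enum {: {ffun edge n -> bool} * {ffun edge n -> bool}}) g0 _)).
  move=> x [w [w' [wS w'S ne e]]]; exists (w, w'); split; first by rewrite mem_enum.
  by split.
move=> [w w']; case: (eqVneq w w') => [->|ne].
  by apply: gn_sub g0 => x [_ _ /eqP].
case: (pickP (fun e => w e != w' e)) => [e0 He0|none]; last first.
  by case/eqP: ne; apply/ffunP => e; have := none e; move/negbFE/eqP.
pose c (i : edge n + edge n) : R := match i with inl e => sgnb (w e) - sgnb (w' e) | inr _ => 0 end.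
have c0 : c (inl e0) != 0.
  rewrite /c /sgnb; move: He0; case: (w e0); case: (w' e0) => //= _; apply/eqP => h; move: h; lra.
have H := @gn_hyper R (edge n + edge n)%type c (inl e0) (E w w') c0.
apply: gn_sub H.
move=> x [_ _ _ e] /=; rewrite big_sumType /=.
rewrite [X in _ + X]big1 ?addr0; last by move=> i _; rewrite mul0r.
by rewrite -e; apply: eq_bigr => i _; rewrite mulrC.
Qed.
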